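(* Let $G$ be a Borel groupoid which is the increasing union of a sequence $(G_n)$ of proper Borel subgroupoids. Then $G$ is Borel amenable.
   Context: All Borel spaces are analytic. For a Borel groupoid $H$ with $H$ acting on itself by left multiplication and on $H^{(0)}$ by $\gamma\cdot s(\gamma)=r(\gamma)$: $H$ is proper if there is a Borel system $\{m^u\}_{u\in H^{(0)}}$ of probability measures, $m^u$ supported on $H^u=r^{-1}(u)$, $u\mapsto\int f\,dm^u$ Borel for nonnegative Borel $f$, with $\gamma\cdot m^{s(\gamma)}=m^{r(\gamma)}$. $G$ is Borel amenable if there is a sequence of such Borel systems $m_n$ of probability measures on $G$ with $\|\gamma\cdot m_n^{s(\gamma)}-m_n^{r(\gamma)}\|_1\to0$ for every $\gamma\in G$ (total variation norm). *)

(* Defs.v *)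
From HB Require Import structures.
From mathcomp Require Import all_boot all_order all_algebra.
From mathcomp Require Import all_classical all_reals all_analysis measurable_realfun.
Set Implicit Arguments. Unset Strict Implicit. Unset Printing Implicit Defensive.
Import Order.TTheory GRing.Theory Num.Theory.
Local Open Scope classical_set_scope.
Local Open Scope ring_scope.

Definition analytic_subset (R : realType) (A : set R) : Prop :=
  exists B : set (R * R)%type, measurable B /\ A = fst @` B.

(* A measurable space is an analytic Borel space iff it is Borel-isomorphic to
   an analytic subset of ℝ with its relative Borel structure. *)
Definition analytic_space d (T : measurableType d) : Prop :=
  exists (R : realType) (phi : T -> R),
    injective phi /\ analytic_subset (range phi) /\
    (forall E : set T, measurable E <-> exists B : set R, measurable B /\ E = phi @^-1` B).

(* Every element of the carrier T is an arrow; units are the u with rng u = u. *)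
Record borel_groupoid d (T : measurableType d) := BorelGroupoid {
  src : T -> T;
  rng : T -> T;
  mul : T -> T -> T;   (* mul x y = x y, meaningful when src x = rng y *)
  inv : T -> T;
  rng_rng : forall x, rng (rng x) = rng x;
  src_rng : forall x, src (rng x) = rng x;
  rng_src : forall x, rng (src x) = src x;
  src_src : forall x, src (src x) = src x;
  rng_mul : forall x y, src x = rng y -> rng (mul x y) = rng x;
  src_mul : forall x y, src x = rng y -> src (mul x y) = src y;
  mulA : forall x y z, src x = rng y -> src y = rng z ->
    mul (mul x y) z = mul x (mul y z);
  mul_rng : forall x, mul (rng x) x = x;
  mul_src : forall x, mul x (src x) = x;
  rng_inv : forall x, rng (inv x) = src x;
  src_inv : forall x, src (inv x) = rng x;
  mulV : forall x, mul x (inv x) = rng x;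
  mulVx : forall x, mul (inv x) x = src x;
  meas_units : measurable [set u : T | rng u = u];
  meas_src : measurable_fun setT src;
  meas_rng : measurable_fun setT rng;
  meas_inv : measurable_fun setT inv;
  meas_G2 : measurable [set p : (T * T)%type | src p.1 = rng p.2];
  meas_mul : measurable_fun [set p : (T * T)%type | src p.1 = rng p.2]
               (fun p => mul p.1 p.2)
}.

Section Amen.
Context d (T : measurableType d) (R : realType) (G : borel_groupoid T).
Local Notation s := (src G).
Local Notation r := (rng G).
Local Notation mul := (mul G).

Definition borel_subgroupoid (H : set T) : Prop :=
  measurable H /\ (forall x, H x -> H (inv G x)) /\
  (forall x y, H x -> H y -> s x = r y -> H (mul x y)).

Definition unit_space (H : set T) : set T := [set u | H u /\ r u = u].

Definition fiber (H : set T) (u : T) : set T := [set x | H x /\ r x = u].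

Definition translate (g : T) (mu : set T -> \bar R) : set T -> \bar R :=
  fun E => mu [set x | r x = s g /\ E (mul g x)].

(* Borel system of probability measures {m^u}_{u in H^(0)} on H (each m^u is
   a measure on G, concentrated on H^u) *)
Definition borel_system (H : set T) (m : T -> {measure set T -> \bar R}) : Prop :=
  (forall u, unit_space H u -> m u setT = 1%E) /\
  (forall u, unit_space H u -> m u (~` fiber H u) = 0%E) /\
  (forall f : T -> \bar R, measurable_fun setT f -> (forall x, 0 <= f x)%E ->
     measurable_fun (unit_space H) (fun u => (\int[m u]_x f x)%E)).

Definition proper_subgroupoid (H : set T) : Prop :=
  exists m : T -> {measure set T -> \bar R}, borel_system H m /\
    forall g, H g -> forall E, measurable E ->
      translate g (m (s g)) E = m (r g) E.

Definition tv_norm (mu nu : set T -> \bar R) : \bar R :=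
  ereal_sup [set t : \bar R | exists (n : nat) (E : nat -> set T),
     (forall i, measurable (E i)) /\ trivIset `I_n E /\
     \bigcup_(i in `I_n) E i = setT /\
     t = (\sum_(i < n) `|mu (E i) - nu (E i)|)%E].

Definition borel_amenable : Prop :=
  exists m : nat -> T -> {measure set T -> \bar R},
    (forall n, borel_system setT (m n)) /\
    forall g, (fun n => tv_norm (translate g (m n (s g))) (m n (r g))) @ \oo
              --> 0%E.

End Amen.

(* Main.v *)
Require Import Defs.
From mathcomp Require Import all_boot all_order all_algebra.
From mathcomp Require Import all_classical all_reals all_analysis measurable_realfun.
Import Order.TTheory GRing.Theory Num.Theory.
Local Open Scope classical_set_scope.

Theorem lemma2p8 (d : measure_display) (T : measurableType d) (R : realType)
  (hT : analytic_space T) (G : borel_groupoid T) (Gn : nat -> set T)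
  (hsub : forall n, borel_subgroupoid G (Gn n))
  (hprop : forall n, proper_subgroupoid R G (Gn n))
  (hincr : forall n, Gn n `<=` Gn n.+1)
  (hunion : \bigcup_n Gn n = setT) :
  borel_amenable R G.
Proof.
have [M hM] := choice hprop.
have msing : forall u : T, measurable [set u].
  move=> u; case: hT => R' [phi [phiI [_ hphi]]].
  apply/hphi; exists [set phi u]; split; first exact: measurable_set1.
  by apply/seteqP; split=> x /=; [move->|move/phiI].
have mfib : forall u, measurable (fiber G setT u).
  move=> u; have -> : fiber G setT u = setT `&` rng G @^-1` [set u].
    by apply/seteqP; split=> x; rewrite /fiber /=; tauto.
  exact: (meas_rng G measurableT (msing u)).
pose m' n u : measure T R :=
  if pselect (Gn n u) then M n u else @dirac _ T u R.
exists m'; split.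
  move=> n; have [[h1 [h2 h3]] _] := hM n.
  have mU : measurable (unit_space G setT).
    have -> : unit_space G setT = [set u | rng G u = u].
      by apply/seteqP; split=> x /=; [case|].
    exact: meas_units.
  have mGn := (hsub n).1.
  split; [|split].
  - move=> u [_ ru]; rewrite /m'; case: pselect => Gu.
      by apply: h1.
    exact: diracT.
  - move=> u [_ ru]; rewrite /m'; case: pselect => Gu.
      apply: (subset_measure0 _ _ _ (h2 u _)) => //.
      + exact: measurableC.
      + apply: measurableC; have -> : fiber G (Gn n) u = Gn n `&` fiber G setT u.
          by apply/seteqP; split=> x; rewrite /fiber /=; tauto.
        exact: measurableI.
      + by move=> x /= nf [_ rx]; apply: nf.
    by rewrite /= diracE memNset //=; rewrite /fiber /= => -[].
  - move=> f mf f0.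
    have -> : unit_space G setT = (unit_space G setT `&` Gn n) `|` (unit_space G setT `&` ~` Gn n).
      by rewrite -setIUr setUCr setIT.
    apply/measurable_funU; [exact: measurableI|apply: measurableI => //; exact: measurableC|].
    split.
      have -> : unit_space G setT `&` Gn n = unit_space G (Gn n).
        by apply/seteqP; split=> x /=; [case=> -[]|case=> ? ?].
      apply: eq_measurable_fun (h3 f mf f0).
      by move=> u /[1!inE] -[Gu _]; rewrite /m'; case: pselect.
    apply: (@eq_measurable_fun _ _ _ _ _ f).
      move=> u /[1!inE] -[_ Gu]; rewrite /m'; case: pselect => [//|_ /=].
      by rewrite integral_dirac // diracT mul1e.
    apply: measurable_funS mf => //.
move=> g.
have mono : forall n k, (n <= k)%N -> Gn n `<=` Gn k.
  move=> n k /subnK <-; elim: (k - n)%N => [|j IH] x //=.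
  by move=> /IH; rewrite addSn; apply: hincr.
have : (\bigcup_n Gn n) g by rewrite hunion.
case=> N _ GNg.
apply: cvg_near_cst; exists N => // n /= Nn.
have Gg : Gn n g by exact: mono GNg.
have [[h1 [h2 h3]] hinv] := hM n.
have [_ [hI hM2]] := hsub n.
have Gs : Gn n (src G g).
  rewrite -(mulVx G g); apply: hM2 => //; first exact: hI.
  by rewrite src_inv.
have Gr : Gn n (rng G g).
  rewrite -(mulV G g); apply: hM2 => //; first exact: hI.
  by rewrite rng_inv.
have -> : m' n (src G g) = M n (src G g) by rewrite /m'; case: pselect.
have -> : m' n (rng G g) = M n (rng G g) by rewrite /m'; case: pselect.
have fin : forall E, measurable E -> M n (rng G g) E \is a fin_num.
  move=> E mE; rewrite ge0_fin_numE ?measure_ge0 //.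
  apply: (le_lt_trans (y := M n (rng G g) setT)).
    by rewrite le_measure ?inE.
  by rewrite h1 ?ltry //; split => //; rewrite rng_rng.
rewrite /tv_norm.
have -> : [set t : \bar R | exists (n0 : nat) (E : nat -> set T),
     (forall i, measurable (E i)) /\ trivIset `I_n0 E /\
     \bigcup_(i in `I_n0) E i = setT /\
     t = (\sum_(i < n0) `|translate G g (M n (src G g)) (E i) - M n (rng G g) (E i)|)%E]
    = [set 0%E].
  apply/seteqP; split => t /=.
    move=> [k [E [mE [_ [_ ->]]]]].
    rewrite big1 // => i _.
    by rewrite hinv // subee ?fin // abse0.
  move=> ->; exists 1%N, (fun _ => setT); split => //; split.
    have -> : `I_1 = [set 0%N] by apply/seteqP; split => x /=; case: x.
    exact: trivIset1.
  split.
    by apply/seteqP; split => // x _; exists 0%N.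
  by rewrite big1 // => i _; rewrite hinv // subee ?fin // abse0.
by rewrite ereal_sup1.
Qed.
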